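(* Let $M$ be a gridding matrix and let $\mathcal{C}\subseteq\mathsf{Grid}(M)$ be a permutation class. Then the set $\mathcal{C}^\#$ of $M$-gridded permutations whose underlying permutations lie in $\mathcal{C}$ is labelled well quasi-ordered (under labelled gridded containment) if and only if $\mathcal{C}$ is labelled well quasi-ordered.
   Context: Permutations are identified with their plots; $\sigma\le\pi$ if $\pi$ has a subsequence order-isomorphic to $\sigma$; a permutation class is a containment-closed set. A gridding matrix has entries in $\{0,1,-1\}$; an $m\times n$ one has $m$ columns, $n$ rows, $M_{ij}$ in column $i$ from the left and row $j$ from the bottom. An $M$-gridding of a permutation $\pi$ of length $L$ is a choice of vertical lines $\tfrac12=v_0\le\dots\le v_m=L+\tfrac12$ and horizontal lines $\tfrac12=h_0\le\dots\le h_n=L+\tfrac12$, not through points of $\pi$, such that in each cell $C_{ij}=\{v_{i-1}<x<v_i,\ h_{j-1}<y<h_j\}$ the points of $\pi$ are absent if $M_{ij}=0$, increasing if $M_{ij}=1$, decreasing if $M_{ij}=-1$; the result is an $M$-gridded permutation. $\mathsf{Grid}(M)$ is the class of permutations having an $M$-gridding. Gridded containment: $\sigma^\#\le\pi^\#$ if some subsequence of $\pi$ order-isomorphic to $\sigma$ maps each point of $\sigma^\#$ to a point of $\pi^\#$ lying in the cell with the same index $(i,j)$. A quasi-order is wqo if every infinite sequence $x_1,x_2,\dots$ has $i<j$ with $x_i\le x_j$. For a quasi-order $L$, an $L$-labelled (gridded) permutation is a (gridded) permutation with a map from its points to $L$; $(\sigma,\ell_\sigma)\le(\pi,\ell_\pi)$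 if some (gridded) embedding of $\sigma$ into $\pi$ maps each point to one whose label is $\ge$ its own. A set of (gridded) permutations is labelled well quasi-ordered if its set of $L$-labelled elements is wqo under this order for every wqo $L$. *)

(* Defs.v *)
From mathcomp Require Import all_boot all_algebra.
Set Implicit Arguments. Unset Strict Implicit. Unset Printing Implicit Defensive.
Import GRing.Theory Num.Theory.

Definition is_perm (s : seq nat) : Prop := perm_eq s (iota 0 (size s)).

Definition pattern_emb (sg pi : seq nat) (f : nat -> nat) : Prop :=
  (forall x y, x < y -> y < size sg -> f x < f y) /\
  (forall x, x < size sg -> f x < size pi) /\
  (forall x y, x < size sg -> y < size sg ->
     (nth 0 sg x < nth 0 sg y) = (nth 0 pi (f x) < nth 0 pi (f y))).

Definition contained (sg pi : seq nat) : Prop := exists f, pattern_emb sg pi f.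

Definition perm_class (C : seq nat -> Prop) : Prop :=
  (forall s, C s -> is_perm s) /\
  (forall s p, C p -> is_perm s -> contained s p -> C s).

(* Grid lines are encoded by integer cut points: the vertical line v_i of the
   paper (a half-integer) is v i + 1/2 in 1-indexed coordinates, so 0-indexed
   position x lies in column i (0-indexed, i < m) iff v i <= x < v (i+1);
   similarly for values and rows. *)
Definition in_cell (v h : nat -> nat) (s : seq nat) (x i j : nat) : bool :=
  (v i <= x < v i.+1) && (h j <= nth 0 s x < h j.+1).

(* M : 'M[int]_(m, n) is read with first index = column (from the left),
   second index = row (from the bottom). *)
Definition is_gridding (m n : nat) (M : 'M[int]_(m, n)) (s : seq nat)
    (v h : nat -> nat) : Prop :=
  (v 0 = 0 /\ v m = size s /\ (forall i, i < m -> v i <= v i.+1)) /\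
  (h 0 = 0 /\ h n = size s /\ (forall j, j < n -> h j <= h j.+1)) /\
  (forall (i : 'I_m) (j : 'I_n),
     (M i j = 0%R -> forall x, x < size s -> ~~ in_cell v h s x i j) /\
     (M i j = 1%R -> forall x y, x < y -> y < size s ->
        in_cell v h s x i j -> in_cell v h s y i j ->
        nth 0 s x < nth 0 s y) /\
     (M i j = (-1)%R -> forall x y, x < y -> y < size s ->
        in_cell v h s x i j -> in_cell v h s y i j ->
        nth 0 s y < nth 0 s x)).

Definition in_Grid (m n : nat) (M : 'M[int]_(m, n)) (s : seq nat) : Prop :=
  exists v h, is_gridding M s v h.

Record gperm := GPerm { gp_perm : seq nat; gp_v : nat -> nat; gp_h : nat -> nat }.

Definition gridded_emb (m n : nat) (a b : gperm) (f : nat -> nat) : Prop :=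
  pattern_emb (gp_perm a) (gp_perm b) f /\
  forall x, x < size (gp_perm a) -> forall (i : 'I_m) (j : 'I_n),
    in_cell (gp_v a) (gp_h a) (gp_perm a) x i j ->
    in_cell (gp_v b) (gp_h b) (gp_perm b) (f x) i j.

Definition gridded_class (m n : nat) (M : 'M[int]_(m, n)) (C : seq nat -> Prop)
    (g : gperm) : Prop :=
  C (gp_perm g) /\ is_gridding M (gp_perm g) (gp_v g) (gp_h g).

Definition wqo_on (X : Type) (S : X -> Prop) (le : X -> X -> Prop) : Prop :=
  forall s : nat -> X, (forall k, S (s k)) -> exists i j, i < j /\ le (s i) (s j).

Definition quasi_order (X : Type) (le : X -> X -> Prop) : Prop :=
  (forall x, le x x) /\ (forall x y z, le x y -> le y z -> le x z).

Definition is_wqo (X : Type) (le : X -> X -> Prop) : Prop :=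
  quasi_order le /\ wqo_on (fun _ => True) le.

Definition lwqo (S : seq nat -> Prop) : Prop :=
  forall (L : Type) (leL : L -> L -> Prop), is_wqo leL ->
    wqo_on (fun p : seq nat * (nat -> L) => S p.1)
      (fun a b => exists f, pattern_emb a.1 b.1 f /\
                   forall x, x < size a.1 -> leL (a.2 x) (b.2 (f x))).

Definition lwqo_gridded (m n : nat) (S : gperm -> Prop) : Prop :=
  forall (L : Type) (leL : L -> L -> Prop), is_wqo leL ->
    wqo_on (fun p : gperm * (nat -> L) => S p.1)
      (fun a b => exists f, gridded_emb m n a.1 b.1 f /\
                   forall x, x < size (gp_perm a.1) -> leL (a.2 x) (b.2 (f x))).

(* Main.v *)
Require Import Defs.
From mathcomp Require Import all_boot all_algebra.
From Stdlib Require Import Classical ClassicalEpsilon.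
From mathcomp Require Import zify.

Definition col (v : nat -> nat) (m x : nat) : nat :=
  count (fun k => v k.+1 <= x) (iota 0 m).

Lemma col_le v m x : col v m x <= m.
Proof. by rewrite /col; apply: leq_trans (count_size _ _) _; rewrite size_iota. Qed.

Lemma mono_v (v : nat -> nat) m : (forall k, k < m -> v k <= v k.+1) ->
  forall a b, a <= b -> b <= m -> v a <= v b.
Proof.
move=> Hv a; elim=> [|b IH] Hab Hbm.
  by rewrite leqn0 in Hab; rewrite (eqP Hab).
rewrite leq_eqVlt in Hab; case/orP: Hab => [/eqP -> //|Hab].
apply: leq_trans (IH Hab (ltnW Hbm)) (Hv _ Hbm).
Qed.

Lemma count_lt_iota i m : count (fun k => k < i) (iota 0 m) = minn i m.
Proof.
elim: m => [|m IH]; first by rewrite minn0.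
rewrite -addn1 iotaD count_cat IH /= add0n addn0.
by case: (ltnP m i) => H /=; lia.
Qed.

Lemma col_spec (v : nat -> nat) m x i : (forall k, k < m -> v k <= v k.+1) ->
  i < m -> v i <= x < v i.+1 -> col v m x = i.
Proof.
move=> Hv Him /andP [H1 H2].
rewrite /col (@eq_in_count _ _ (fun k => k < i)).
  by rewrite count_lt_iota (minn_idPl (ltnW Him)).
move=> k; rewrite mem_iota add0n => /andP [_ Hk].
case: (ltnP k i) => Hki.
  exact: (leq_trans (@mono_v v m Hv k.+1 i Hki (ltnW Him)) H1).
apply/negbTE; rewrite -ltnNge.
exact: (leq_trans H2 (@mono_v v m Hv i.+1 k.+1 Hki Hk)).
Qed.

Lemma col_exists (v : nat -> nat) m y : v 0 = 0 -> y < v m ->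
  exists2 i, i < m & v i <= y < v i.+1.
Proof.
move=> H0; elim: m => [|m IH] Hy; first by rewrite H0 in Hy.
case: (ltnP y (v m)) => H.
  by case: (IH H) => i Hi Hi2; exists i => //; apply: ltnW.
by exists m => //; rewrite H.
Qed.

Lemma col_in (v : nat -> nat) m y : v 0 = 0 -> (forall k, k < m -> v k <= v k.+1) ->
  y < v m -> col v m y < m /\ v (col v m y) <= y < v (col v m y).+1.
Proof.
move=> H0 Hv Hy; case: (@col_exists v m y H0 Hy) => i Hi Hi2.
by rewrite (@col_spec v m y i Hv Hi Hi2).
Qed.

Lemma perm_nth s x : is_perm s -> x < size s -> nth 0 s x < size s.
Proof.
move=> Hp Hx; have := mem_nth 0 Hx.
by rewrite (perm_mem Hp) mem_iota add0n.
Qed.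

Lemma cell_char m n (M : 'M[int]_(m, n)) s v h x (i : 'I_m) (j : 'I_n) :
  is_gridding M s v h -> is_perm s -> x < size s ->
  in_cell v h s x i j = (col v m x == i) && (col h n (nth 0 s x) == j).
Proof.
move=> [[v0 [vm Hv]] [[h0 [hn Hh]] _]] Hp Hx.
rewrite /in_cell.
case E1: (v i <= x < v i.+1); case E2: (h j <= nth 0 s x < h j.+1) => /=.
- by rewrite (@col_spec v m x i Hv (ltn_ord i) E1) (@col_spec h n _ j Hh (ltn_ord j) E2) !eqxx.
- have [_ Hc] := @col_in h n (nth 0 s x) h0 Hh ltac:(by rewrite hn; exact: perm_nth).
  by apply/esym/negbTE/negP => /andP [_ /eqP Hc']; rewrite Hc' E2 in Hc.
- have [_ Hc] := @col_in v m x v0 Hv ltac:(by rewrite vm).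
  by apply/esym/negbTE/negP => /andP [/eqP Hc' _]; rewrite Hc' E1 in Hc.
- have [_ Hc] := @col_in v m x v0 Hv ltac:(by rewrite vm).
  by apply/esym/negbTE/negP => /andP [/eqP Hc' _]; rewrite Hc' E1 in Hc.
Qed.

Lemma pigeon (F : finType) (s : nat -> F) :
  exists c, forall N, exists k, (N <= k) && (s k == c).
Proof.
apply: NNPP => Hn.
have Hb : forall c, exists N, forall k, N <= k -> s k != c.
  move=> c; apply: NNPP => Hc; apply: Hn; exists c => N.
  apply: NNPP => Hk; apply: Hc; exists N => k Hk'.
  by apply/negP => Heq; apply: Hk; exists k; rewrite Hk' Heq.
have Hl : forall l : seq F, exists B, forall c, c \in l -> forall k, B <= k -> s k != c.
  elim=> [|c l [B HB]]; first by exists 0.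
  have [N HN] := Hb c.
  exists (maxn B N) => c'; rewrite in_cons => /orP [/eqP -> | Hc'] k Hk.
    by apply: HN; apply: leq_trans Hk; apply: leq_maxr.
  by apply: HB => //; apply: leq_trans Hk; apply: leq_maxl.
have [B HB] := Hl (enum F).
by have := HB (s B) (mem_enum _ _) B (leqnn _); rewrite eqxx.
Qed.

Lemma prod_wqo (L : Type) (leL : L -> L -> Prop) (F : finType) :
  is_wqo leL -> is_wqo (fun a b : L * F => leL a.1 b.1 /\ a.2 = b.2).
Proof.
move=> [[Hr Ht] Hw]; split.
  split; first by move=> x; split.
  by move=> x y z [H1 H2] [H3 H4]; split; [exact: Ht H1 H3 | rewrite H2].
move=> s _.
have [c Hc] := @pigeon F (fun k => (s k).2).
pose phi N := xchoose (Hc N).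
have Hphi N : (N <= phi N) && ((s (phi N)).2 == c) := xchooseP (Hc N).
pose g := fix g k := if k is k'.+1 then phi (g k').+1 else phi 0.
have Hg k : g k < g k.+1.
  by have := Hphi (g k).+1 => /andP [].
have Hgm : forall i j, i < j -> g i < g j.
  exact: (@homo_ltn _ g (fun a b => a < b) (fun y x z => @ltn_trans y x z) Hg).
have Hgc k : (s (g k)).2 = c.
  by case: k => [|k] /=; [have := Hphi 0 | have := Hphi (g k).+1]; case/andP => _ /eqP.
have [i [j [Hij Hle]]] := Hw (fun k => (s (g k)).1) (fun _ => I).
exists (g i), (g j); split; first exact: Hgm.
by split => //; rewrite !Hgc.
Qed.

Definition cellof (m n : nat) (g : gperm) (x : nat) : 'I_m.+1 * 'I_n.+1 :=
  (inord (col (gp_v g) m x), inord (col (gp_h g) n (nth 0 (gp_perm g) x))).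

Lemma inord_inj k a b : a <= k -> b <= k -> inord a = inord b :> 'I_k.+1 -> a = b.
Proof. by move=> Ha Hb /(congr1 (@nat_of_ord _)); rewrite !inordK. Qed.

Theorem lemma4p7 (m n : nat) (M : 'M[int]_(m, n)) (C : seq nat -> Prop) :
  (forall (i : 'I_m) (j : 'I_n), M i j \in [:: 0%R; 1%R; (-1)%R]) ->
  perm_class C ->
  (forall p, C p -> in_Grid M p) ->
  (lwqo_gridded m n (gridded_class M C) <-> lwqo C).
Proof.
move=> _ [HCp _] HG; split.
- move=> HW L leL HL s Hs.
  pose gr k : {vh : (nat -> nat) * (nat -> nat) | is_gridding M (s k).1 vh.1 vh.2} :=
    constructive_indefinite_description _
      (let: ex_intro v (ex_intro h H) := HG _ (Hs k) in ex_intro _ (v, h) H).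
  pose s' k := (GPerm (s k).1 (proj1_sig (gr k)).1 (proj1_sig (gr k)).2, (s k).2).
  have [i [j [Hij [f [[Hf _] Hl]]]]] := HW L leL HL s' (fun k => conj (Hs k) (proj2_sig (gr k))).
  by exists i, j; split => //; exists f.
- move=> HW L leL HL s Hs.
  pose leL' := fun a b : L * ('I_m.+1 * 'I_n.+1) => leL a.1 b.1 /\ a.2 = b.2.
  have HL' : is_wqo leL' := @prod_wqo L leL _ HL.
  pose s' k := (gp_perm (s k).1, fun x => ((s k).2 x, cellof m n (s k).1 x)).
  have [i [j [Hij [f [Hf Hl]]]]] := HW _ leL' HL' s' (fun k => (Hs k).1).
  exists i, j; split => //; exists f; split; last by move=> x Hx; case: (Hl x Hx).
  split => // x Hx i0 j0.
  have [Ca Ga] := Hs i; have [Cb Gb] := Hs j.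
  have Pa := HCp _ Ca; have Pb := HCp _ Cb.
  have Hfx : f x < size (gp_perm (s j).1) by case: Hf => _ [H _]; exact: H.
  rewrite (@cell_char m n M _ _ _ x i0 j0 Ga Pa Hx) (@cell_char m n M _ _ _ (f x) i0 j0 Gb Pb Hfx).
  case: (Hl x Hx) => _ /= Hc; rewrite /cellof in Hc; case: Hc => H1 H2.
  move/(@inord_inj _ _ _ (col_le _ _ _) (col_le _ _ _)): H1 => <-.
  by move/(@inord_inj _ _ _ (col_le _ _ _) (col_le _ _ _)): H2 => <-.
Qed.
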